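(* Let $k\ge 3$ be an integer and let $D$ be an oriented graph on $n\ge 1$ vertices such that for every vertex $x$, the in-neighbourhood $x^-$ induces a tournament, and such that $D$ has no directed cycle of length at most $k$. Then $D$ has a vertex of out-degree strictly less than $n/k$.
   Context: Digraphs are finite, no loops, no parallel arcs; an oriented graph has no digon. $x^-$ is the in-neighbourhood of $x$; the out-degree of $x$ is the number of out-neighbours. *)

(* Defs.v *)
From mathcomp Require Import all_boot.
Set Implicit Arguments. Unset Strict Implicit. Unset Printing Implicit Defensive.

(* A digraph on a finite vertex type T is an arc relation e : rel T,
   with e x y meaning there is an arc x -> y. *)

Definition oriented (T : finType) (e : rel T) : Prop :=
  (forall x, ~~ e x x) /\ (forall x y, e x y -> ~~ e y x).

Definition in_nbhd (T : finType) (e : rel T) (x : T) : {set T} :=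
  [set y | e y x].

Definition out_nbhd (T : finType) (e : rel T) (x : T) : {set T} :=
  [set y | e x y].

Definition induces_tournament (T : finType) (e : rel T) (A : {set T}) : Prop :=
  forall u v, u \in A -> v \in A -> u != v -> e u v || e v u.

(* a directed cycle of length l: a sequence of l distinct vertices
   [:: v1; ...; vl] with arcs v1->v2->...->vl->v1 *)
Definition dir_cycle (T : finType) (e : rel T) (s : seq T) : bool :=
  [&& 0 < size s, uniq s & cycle e s].

Definition no_short_cycle (T : finType) (e : rel T) (k : nat) : Prop :=
  forall s : seq T, dir_cycle e s -> k < size s.

(* Main.v *)
Require Import Defs.
From mathcomp Require Import all_boot.
From mathcomp Require Import zify.
Set Implicit Arguments. Unset Strict Implicit. Unset Printing Implicit Defensive.

Section Main.
Variables (k : nat) (T : finType) (e : rel T).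
Hypotheses (Hk : 3 <= k) (Hor : oriented e)
  (Htour : forall x : T, induces_tournament e (in_nbhd e x))
  (Hcyc : no_short_cycle e k).

Lemma noloop x : ~~ e x x.
Proof. by case: Hor. Qed.

Lemma nodigon x y : e x y -> e y x -> False.
Proof. by case: Hor => _ H /H/negP. Qed.

Lemma no3 a b c : e a b -> e b c -> e c a -> False.
Proof.
move=> hab hbc hca.
have nab : a != b by apply: contraTneq hab => ->; exact: noloop.
have nbc : b != c by apply: contraTneq hbc => ->; exact: noloop.
have nca : c != a by apply: contraTneq hca => ->; exact: noloop.
have := Hcyc (s := [:: a; b; c]).
rewrite /dir_cycle /= hab hbc hca !inE negb_or nab nbc eq_sym nca /=.
have -> : k < 3 = false by lia.
by move/(_ isT).
Qed.

Lemma walk_cycle x p : path e x p -> e (last x p) x -> k <= size p.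
Proof.
move=> hp; case/shortenP: hp => p' hp' hu hsub hl.
have hd : dir_cycle e (x :: p') by rewrite /dir_cycle hu /= rcons_path hp' hl.
have /= hk := Hcyc hd.
have : size p' <= size p by apply: uniq_leq_size => //; case/andP: hu.
by rewrite ltnS in hk; apply: leq_trans.
Qed.

Fixpoint ball (W : {set T}) (q : T) (j : nat) : {set T} :=
  if j is j'.+1 then ball W q j' :|: [set y in W | [exists x in ball W q j', e x y]]
  else [set q].

Lemma ballS (W : {set T}) (q : T) j : ball W q j \subset ball W q j.+1.
Proof. by rewrite /= subsetUl. Qed.

Lemma ballSin (W : {set T}) (q : T) j x : x \in ball W q j -> x \in ball W q j.+1.
Proof. by move=> h; rewrite /= inE h. Qed.

Lemma ball_mono (W : {set T}) (q : T) i j : i <= j -> ball W q i \subset ball W q j.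
Proof.
move=> /subnK <-; elim: (j - i) => [|n IH] //=.
exact: subset_trans IH (ballS _ _ _).
Qed.

Lemma ballW (W : {set T}) (q : T) j : q \in W -> ball W q j \subset W.
Proof.
move=> hq; elim: j => [|j IH] /=; first by rewrite sub1set.
by rewrite subUset IH /=; apply/subsetP => y; rewrite inE => /andP[].
Qed.

Lemma ball0 (W : {set T}) (q : T) j : q \in ball W q j.
Proof. by apply: (subsetP (ball_mono W q (leq0n j))); rewrite inE. Qed.

Lemma ball_path (W : {set T}) (q : T) j y : y \in ball W q j ->
  exists p, [/\ path e q p, last q p = y & size p <= j].
Proof.
elim: j y => [|j IH] y /=; first by rewrite inE => /eqP ->; exists [::].
case/setUP => [/IH [p [h1 h2 h3]]|]; first by exists p; split => //; lia.
rewrite inE => /andP[_ /existsP [x /andP [/IH [p [h1 h2 h3]] hxy]]].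
exists (rcons p y); rewrite rcons_path h1 h2 hxy last_rcons size_rcons; split => //.
Qed.

Lemma ball_step (W : {set T}) (q : T) j x y : x \in ball W q j -> y \in W -> e x y -> y \in ball W q j.+1.
Proof.
move=> hx hy hxy /=; apply/setUP; right; rewrite inE hy /=.
by apply/existsP; exists x; rewrite hx.
Qed.

Lemma ball_pred (W : {set T}) (q : T) j y : y \in ball W q j.+1 -> y \notin ball W q j ->
  exists2 p, p \in ball W q j & e p y.
Proof.
move=> /= /setUP [->//|]; rewrite inE => /andP[_ /existsP [x /andP[h1 h2]]] _.
by exists x.
Qed.

Lemma ball_sub (W W' : {set T}) (q : T) j : W' \subset W -> ball W' q j \subset ball W q j.
Proof.
move=> hW; elim: j => [|j IH] //=.
apply: setUSS => //; apply/subsetP => y; rewrite !inE => /andP[hy /existsP[x /andP[hx hxy]]].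
rewrite (subsetP hW _ hy) /=; apply/existsP; exists x; rewrite hxy andbT.
exact: (subsetP IH).
Qed.


Lemma LL (W : {set T}) (q : T) l y a w : q \in W -> y \in ball W q l -> l < k ->
  e y w -> w \in ball W q a -> y \in ball W q a.
Proof.
move=> hq hy hl; elim: a w => [|a IH] w hyw /=.
  rewrite inE => /eqP hw; subst w.
  have [p [h1 h2 h3]] := ball_path hy.
  have := walk_cycle h1; rewrite h2 => /(_ hyw) h4.
  have : k <= l by apply: leq_trans h4 h3.
  by rewrite leqNgt hl.
case/setUP => [hw|].
  by apply: ballSin; exact: (IH w hyw hw).
rewrite inE => /andP[_ /existsP [p /andP [hp hpw]]].
have hyW : y \in W by apply: (subsetP (ballW l hq)).
case: (eqVneq y p) => [->|hne]; first by apply: ballSin.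
have ht : e y p || e p y by apply: (Htour (x:=w)); rewrite ?inE.
case/orP: ht => [hyp|hpy].
  by apply: ballSin; exact: (IH p hyp hp).
exact: ball_step hp hyW hpy.
Qed.

Definition lay (W : {set T}) (q : T) (j : nat) (y : T) : bool :=
  (y \in ball W q j) && (if j is j'.+1 then y \notin ball W q j' else true).

Lemma lay_ball (W : {set T}) (q : T) j y : lay W q j y -> y \in ball W q j.
Proof. by case/andP. Qed.

Lemma lay_notin (W : {set T}) (q : T) i j y : lay W q j y -> i < j -> y \notin ball W q i.
Proof.
case: j => // j /andP[_ hn]; rewrite ltnS => hij; apply: contra hn => hy.
by apply: (subsetP (ball_mono W q hij)).
Qed.

Lemma lay_uniq (W : {set T}) (q : T) i j y : lay W q i y -> lay W q j y -> i = j.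
Proof.
move=> hi hj; case: (ltngtP i j) => // hij.
  by have := lay_notin hj hij; rewrite (lay_ball hi).
by have := lay_notin hi hij; rewrite (lay_ball hj).
Qed.

Lemma lay_ex (W : {set T}) (q : T) n y : y \in ball W q n -> exists2 l, l <= n & lay W q l y.
Proof.
elim: n => [|n IH] hy.
  by exists 0 => //; rewrite /lay hy.
case: (boolP (y \in ball W q n)) => hn; first by case: (IH hn) => l h1 h2; exists l => //; lia.
by exists n.+1 => //; rewrite /lay hy hn.
Qed.

Lemma lay_pred (W : {set T}) (q : T) j z : lay W q j.+1 z -> exists2 p, lay W q j p & e p z.
Proof.
case/andP => hz hn; case: (ball_pred hz hn) => p hp hpz; exists p => //.
rewrite /lay hp /=; case: j hz hn hp hpz => // j hz hn hp hpz.
have hzW : z \in W.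
  by move: hz => /= /setUP [h|]; [rewrite h in hn|rewrite inE => /andP[]].
apply: contra hn => hp'.
by apply: ball_step hp' hzW hpz.
Qed.

Lemma lay_arc (W : {set T}) (q : T) l j y w : q \in W -> lay W q l y -> l < k -> e y w -> lay W q j w ->
  l <= j <= l.+1.
Proof.
move=> hq hy hl hyw hw.
have hyj := LL hq (lay_ball hy) hl hyw (lay_ball hw).
have hwW : w \in W by apply: (subsetP (ballW j hq)); exact: lay_ball hw.
have hw1 := ball_step (lay_ball hy) hwW hyw.
apply/andP; split.
  rewrite leqNgt; apply/negP => hjl.
  by have := lay_notin hy hjl; rewrite hyj.
rewrite leqNgt; apply/negP => hlj.
by have := lay_notin hw hlj; rewrite hw1.
Qed.

Definition Pz (W : {set T}) (q : T) (j : nat) (z : T) : {set T} :=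
  [set p | e p z & lay W q j p].
Definition Nin (x : T) (S : {set T}) : {set T} := [set w in S | e w x].

Lemma CL z (P : {set T}) s y : (forall p, p \in P -> e p z) -> s \in P ->
  (forall y, y \in P -> #|Nin s P| <= #|Nin y P|) -> y \in P -> e y s -> False.
Proof.
move=> hP hs hmin hy hys.
have hpr : Nin y P \proper Nin s P.
  apply/properP; split.
    apply/subsetP => w; rewrite !inE => /andP[hw hwy]; rewrite hw /=.
    case: (eqVneq w s) => [hws|hne].
      by subst w; exfalso; apply: (nodigon hwy hys).
    have ht : e w s || e s w by apply: (Htour (x:=z)); rewrite ?inE; auto.
    case/orP: ht => // hsw; exfalso; exact: (no3 hsw hwy hys).
  by exists y; rewrite !inE ?hy ?hys //= noloop.
have := proper_card hpr; have := hmin y hy; lia.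
Qed.

Definition goodc (W : {set T}) (q : T) (c : nat -> T) (j : nat) : Prop :=
  (forall i, 0 < i <= j -> lay W q i (c i)) /\
  (forall i, 1 < i <= j -> c i.-1 \in Pz W q i.-1 (c i) /\
     forall y, y \in Pz W q i.-1 (c i) ->
       #|Nin (c i.-1) (Pz W q i.-1 (c i))| <= #|Nin y (Pz W q i.-1 (c i))|).

Lemma chain_ex (W : {set T}) (q : T) j z : 0 < j -> lay W q j z ->
  exists c, c j = z /\ goodc W q c j.
Proof.
elim: j z => [//|j IH] z _ hz.
case: j IH hz => [|j] IH hz.
  exists (fun _ => z); split => //; split.
    by move=> i /andP[h1 h2]; have -> : i = 1 by lia.
  by move=> i; lia.
have [p0 hp0 hp0z] := lay_pred hz.
set P := Pz W q j.+1 z.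
have hp0P : p0 \in P by rewrite /P !inE hp0z hp0.
case: (arg_minnP (fun s => #|Nin s P|) hp0P) => s hsP hmin.
have hsP2 : s \in P by exact: hsP.
have hs : lay W q j.+1 s by move: hsP2; rewrite /P !inE => /andP[].
have [c [hc [hc1 hc2]]] := IH s isT hs.
exists (fun i => if i == j.+2 then z else c i); split; first by rewrite eqxx.
split.
  move=> i hi; case: (eqVneq i j.+2) => [->//|hne].
  by apply: hc1; lia.
move=> i hi; case: (eqVneq i j.+2) => [hij|hne].
  subst i; rewrite /= (_ : j.+1 == j.+2 = false); last by apply/eqP; lia.
  by rewrite hc; split.
have hne' : i.-1 == j.+2 = false by apply/eqP; lia.
rewrite hne'; apply: hc2; lia.
Qed.

Lemma bad (W : {set T}) (q : T) m c I y : goodc W q c m -> lay W q I y -> 0 < I ->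
  I.+1 <= m -> e y (c I) -> e y (c I.+1) -> False.
Proof.
move=> [hc1 hc2] hy hI hIm h1 h2.
have /= [hP hmin] := hc2 I.+1 (ltac:(apply/andP; split => //)).
apply: (CL (z := c I.+1) _ hP hmin _ h1).
  by move=> p; rewrite !inE => /andP[].
by rewrite !inE h2 hy.
Qed.

Lemma out_le1 (W : {set T}) (q : T) m c y : q \in W -> m < k -> goodc W q c m ->
  y \in ball W q m.-1 -> #|[set w in [set c i.+1 | i : 'I_m] | e y w]| <= 1.
Proof.
move=> hq hmk hc hy.
have [l hl hly] := lay_ex hy.
have hlk : l < k by lia.
apply/card_le1_eqP => a b; rewrite !inE => /andP[/imsetP[i _ ->] hya] /andP[/imsetP[j _ ->] hyb].
have hi := lay_arc hq hly hlk hya (proj1 hc i.+1 (ltac:(apply/andP; split => //))).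
have hj := lay_arc hq hly hlk hyb (proj1 hc j.+1 (ltac:(apply/andP; split => //))).
case: (ltngtP i j) => hij.
- have e1 : i.+1 = l by lia.
  have e2 : j.+1 = l.+1 by lia.
  exfalso; apply: (bad hc hly (I := l)); try lia.
    by rewrite -e1.
  by rewrite -e2.
- have e1 : j.+1 = l by lia.
  have e2 : i.+1 = l.+1 by lia.
  exfalso; apply: (bad hc hly (I := l)); try lia.
    by rewrite -e1.
  by rewrite -e2.
- by have -> : i = j by apply: val_inj.
Qed.

Lemma dc (W : {set T}) :
  \sum_(q in W) #|[set w in W | e w q]| = \sum_(y in W) #|[set w in W | e y w]|.
Proof.
have h : forall (f : T -> T -> bool) q, #|[set w in W | f w q]| = \sum_(w in W) (f w q : nat).
  move=> f q; rewrite -sum1_card big_mkcond /= [RHS]big_mkcond /=.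
  by apply: eq_bigr => w _; rewrite !inE; case: (w \in W); case: (f w q).
rewrite (eq_bigr _ (fun q _ => h e q)).
rewrite (eq_bigr _ (fun y _ => h (fun w y => e y w) y)) /=.
exact: exchange_big.
Qed.

Lemma main m N : k = m.+2 -> forall (W : {set T}), #|W| <= N -> forall d,
  (forall q, q \in W -> (forall y, y \in ball W q m -> d <= #|[set w in W | e y w]|) ->
     m.+1 * d + 1 <= #|ball W q m.+1|)
  /\ (W != set0 -> (forall y, y \in W -> d <= #|[set w in W | e y w]|) -> k * d + 1 <= #|W|).
Proof.
move=> hk; elim: N => [|N IH] W hW d.
  have hW0 : W = set0 by apply: cards0_eq; lia.
  by subst W; split => [q|]; rewrite ?inE ?eqxx.
have HP : forall q, q \in W -> (forall y, y \in ball W q m -> d <= #|[set w in W | e y w]|) ->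
     m.+1 * d + 1 <= #|ball W q m.+1|.
  move=> q hq hdeg.
  case: d hdeg => [|d] hdeg.
    rewrite muln0 add0n; apply/card_gt0P; exists q; exact: ball0.
  case: (boolP [exists z, lay W q m.+1 z]) => [/existsP [z hz]|hnz].
  - have [c [_ hc]] := chain_ex (isT : 0 < m.+1) hz.
    set S := [set c i.+1 | i : 'I_m.+1].
    have hSb : S \subset ball W q m.+1.
      apply/subsetP => x /imsetP [i _ ->].
      have hl := proj1 hc i.+1 (ltac:(apply/andP; split => //)).
      exact: (subsetP (ball_mono W q (ltn_ord i))) _ (lay_ball hl).
    have hSW : S \subset W by apply: subset_trans hSb (ballW _ hq).
    have hScard : #|S| = m.+1.
      rewrite card_imset ?card_ord // => i j hij.
      have hi := proj1 hc i.+1 (ltac:(apply/andP; split => //)).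
      have hj := proj1 hc j.+1 (ltac:(apply/andP; split => //)).
      rewrite hij in hi; have := lay_uniq hi hj => [[]] h; exact: val_inj.
    have hqS : q \notin S.
      apply/negP => /imsetP [i _ hqi].
      have hi := proj1 hc i.+1 (ltac:(apply/andP; split => //)).
      by rewrite -hqi in hi; have := lay_notin hi (ltn0Sn i); rewrite ball0.
    set W' := W :\: S.
    have hW' : #|W'| <= N.
      have := cardsID S W; rewrite (setIidPr hSW) hScard /W'; lia.
    have hqW' : q \in W' by rewrite !inE hqS hq.
    have hsubW : W' \subset W by apply: subsetDl.
    have hdeg' : forall y, y \in ball W' q m -> d <= #|[set w in W' | e y w]|.
      move=> y hy.
      have hy1 : y \in ball W q m by apply: (subsetP (ball_sub q m hsubW)).
      have h1 := hdeg y hy1.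
      have h2 := out_le1 hq (ltac:(lia) : m.+1 < k) hc hy1.
      have h3 : [set w in W | e y w] \subset
                [set w in W' | e y w] :|: [set w in S | e y w].
        apply/subsetP => w; rewrite !inE => /andP[hw hyw]; rewrite hw hyw /= andbT.
        by case: (w \in S).
      have h4 := subset_leq_card h3.
      have h5 := leq_card_setU [set w in W' | e y w] [set w in S | e y w].
      have h2' : #|[set w in S | e y w]| <= 1 by exact: h2.
      have h6 := h5.1. lia.
    have [IHP _] := IH W' hW' d.
    have h1 := IHP q hqW' hdeg'.
    have h2 : ball W' q m.+1 \subset ball W q m.+1 :\: S.
      apply/subsetP => y hy; rewrite inE (subsetP (ball_sub q m.+1 hsubW) _ hy) andbT.
      by have := subsetP (ballW m.+1 hqW') _ hy; rewrite inE => /andP[].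
    have h3 := subset_leq_card h2.
    have h4 := cardsID S (ball W q m.+1); rewrite (setIidPr hSb) hScard in h4.
    rewrite mulnS; lia.
  - set Y := ball W q m.
    have hlay : forall y, ~~ lay W q m.+1 y.
      by move=> y; apply/negP => hy; move/negP: hnz; apply; apply/existsP; exists y.
    have hY : ball W q m.+1 = Y.
      apply/eqP; rewrite eqEsubset ballS andbT; apply/subsetP => y hy.
      case: (boolP (y \in Y)) => // hn.
      by have := hlay y; rewrite /lay hy hn.
    have hYW : Y \subset W by apply: ballW.
    have hclosed : forall y w, y \in Y -> w \in W -> e y w -> w \in Y.
      by move=> y w hy hw hyw; rewrite -hY; apply: ball_step hy hw hyw.
    have hnoq : forall y, y \in Y -> ~~ e y q.
      move=> y hy; apply/negP => hyq.
      have [p [h1 h2 h3]] := ball_path hy.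
      have := walk_cycle h1; rewrite h2 => /(_ hyq); lia.
    set Y' := Y :\: [set q].
    have hY' : #|Y'| <= N.
      have h1 : Y' \subset W :\: [set q] by apply: setSD.
      have := subset_leq_card h1.
      have := cardsID [set q] W; rewrite (setIidPr (_ : [set q] \subset W)) ?sub1set // cards1.
      lia.
    have hY'0 : Y' != set0.
      have : 0 < #|[set w in W | e q w]| by apply: leq_trans (hdeg q (ball0 _ _ _)).
      case/card_gt0P => w; rewrite inE => /andP[hw hqw].
      apply/set0Pn; exists w; rewrite !inE (hclosed q w (ball0 _ _ _) hw hqw) andbT.
      by apply: contraTneq hqw => ->; exact: noloop.
    have hdegY : forall y, y \in Y' -> d.+1 <= #|[set w in Y' | e y w]|.
      move=> y; rewrite inE => /andP[_ hy].
      apply: leq_trans (hdeg y hy) _; apply: subset_leq_card; apply/subsetP => w.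
      rewrite !inE => /andP[hw hyw]; rewrite hyw (hclosed y w hy hw hyw) andbT /= andbT.
      by apply: contraTneq hyw => ->; exact: hnoq.
    have [_ IHT] := IH Y' hY' d.+1.
    have h1 := IHT hY'0 hdegY.
    have h2 : #|Y'| <= #|ball W q m.+1| by rewrite hY; apply: subset_leq_card; apply: subsetDl.
    rewrite hk in h1; nia.
split => // hW0 hdeg.
have [q hqW hin] : exists2 q, q \in W & d <= #|[set w in W | e w q]|.
  case: (boolP [exists q in W, d <= #|[set w in W | e w q]|]) => [/exists_inP [q h1 h2]|hne]; first by exists q.
  exfalso; move: hne; rewrite negb_exists_in => /forall_inP hlt.
  have [q0 hq0] := set0Pn _ hW0.
  have hd : 0 < d by have := hlt q0 hq0; rewrite -ltnNge => hh; clear -hh; lia.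
  have h1 : \sum_(q in W) #|[set w in W | e w q]| <= \sum_(q in W) d.-1.
    by apply: leq_sum => i hi; have := hlt i hi; rewrite -ltnNge => hh; clear -hh; lia.
  have h2 : \sum_(q in W) d <= \sum_(y in W) #|[set w in W | e y w]| by apply: leq_sum.
  rewrite dc !sum_nat_const in h1 h2.
  have hW1 : 0 < #|W| by apply/card_gt0P; exists q0.
  nia.
have h1 := HP q hqW (fun y hy => hdeg y (subsetP (ballW m hqW) y hy)).
have hdis : ball W q m.+1 :&: [set w in W | e w q] = set0.
  apply/eqP; rewrite -subset0; apply/subsetP => y /setIP [hy]; rewrite inE => /andP[_ hyq].
  have [p [h1' h2 h3]] := ball_path hy.
  have := walk_cycle h1'; rewrite h2 => /(_ hyq); lia.
have h2 : ball W q m.+1 :|: [set w in W | e w q] \subset W.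
  rewrite subUset ballW //=; by apply/subsetP => w; rewrite inE => /andP[].
have := subset_leq_card h2; rewrite cardsU hdis cards0 subn0.
rewrite hk; nia.
Qed.

End Main.

Theorem theorem3p6 (k : nat) (T : finType) (e : rel T) :
  3 <= k -> 0 < #|T| ->
  oriented e ->
  (forall x : T, induces_tournament e (in_nbhd e x)) ->
  no_short_cycle e k ->
  exists x : T, k * #|out_nbhd e x| < #|T|.
Proof.
move=> hk hT hor htour hcyc.
case/card_gt0P: hT => x0 _.
case: (@arg_minnP T x0 xpredT (fun x => #|out_nbhd e x|) isT) => x _ hmin.
exists x.
have [m hm] : exists m, k = m.+2 by exists k.-2; lia.
have [_ HT] := main hk hor htour hcyc hm (leqnn #|[set: T]|) #|out_nbhd e x|.
have : k * #|out_nbhd e x| + 1 <= #|[set: T]|.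
  apply: HT; first by apply/set0Pn; exists x0; rewrite inE.
  move=> y _; rewrite (_ : [set w in [set: T] | e y w] = out_nbhd e y); first exact: hmin.
  by apply/setP => w; rewrite !inE.
rewrite cardsT => hh; clear -hh; lia.
Qed.
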